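(* Let $(x_n)_{n<\omega}$ be an almost overcomplete sequence in a real normed space $X$. If $x_n \to x$ weakly, then $x_n \to x$ in norm.
   Context: A sequence in a normed space $X$ is almost overcomplete if the closed linear span of every subsequence of it has finite codimension in $X$. *)

(* Defs.v *)
From HB Require Import structures.
From mathcomp Require Import all_boot all_order all_algebra.
From mathcomp Require Import all_classical all_reals all_analysis.
Set Implicit Arguments. Unset Strict Implicit. Unset Printing Implicit Defensive.
Import Order.TTheory GRing.Theory Num.Theory.
Import numFieldNormedType.Exports.
Local Open Scope classical_set_scope.
Local Open Scope ring_scope.

Section Defs.
Context {R : realType} {X : normedModType R}.

Definition lin_span (S : set X) : set X :=
  [set v | exists (n : nat) (c : 'I_n -> R) (s : 'I_n -> X),
             (forall i, S (s i)) /\ v = \sum_(i < n) c i *: s i].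

Definition closed_span (S : set X) : set X := closure (lin_span S).

(* a (linear) subspace Y has finite codimension in X: the quotient X/Y is
   spanned by finitely many classes, i.e. X = Y + span(e_0,...,e_{n-1}) *)
Definition finite_codim (Y : set X) : Prop :=
  exists (n : nat) (e : 'I_n -> X), forall v : X,
    exists y, Y y /\ exists c : 'I_n -> R, v = y + \sum_(i < n) c i *: e i.

Definition almost_overcomplete (x : nat -> X) : Prop :=
  forall phi : nat -> nat, (forall m n, (m < n)%N -> (phi m < phi n)%N) ->
    finite_codim (closed_span (range (x \o phi))).

Definition weak_cvg (x : nat -> X) (l : X) : Prop :=
  forall f : X -> R,
    (forall (a : R) (u v : X), f (a *: u + v) = a * f u + f v) ->
    continuous f ->
    (fun n => f (x n)) @ \oo --> f l.

End Defs.

(* Main.v *)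
Require Import Defs.
From HB Require Import structures.
From mathcomp Require Import all_boot all_order all_algebra.
From mathcomp Require Import all_classical all_reals all_analysis.
From mathcomp Require Import lra.
Import Order.TTheory GRing.Theory Num.Theory.
Import numFieldNormedType.Exports.
Local Open Scope classical_set_scope.
Local Open Scope ring_scope.
Set Implicit Arguments. Unset Strict Implicit. Unset Printing Implicit Defensive.

Section Span.
Context {R : realType} {X : normedModType R}.

Definition subsp (P : set X) := P 0 /\ forall (a : R) u v, P u -> P v -> P (a *: u + v).

Lemma subspD P u v : subsp P -> P u -> P v -> P (u + v).
Proof. by move=> [_ H] Pu Pv; have := H 1 u v Pu Pv; rewrite scale1r. Qed.

Lemma subspZ P a u : subsp P -> P u -> P (a *: u).
Proof. by move=> [P0 H] Pu; have := H a u 0 Pu P0; rewrite addr0. Qed.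

Lemma subspN P u : subsp P -> P u -> P (- u).
Proof. by move=> sP Pu; rewrite -scaleN1r; apply: subspZ. Qed.

Lemma subspB P u v : subsp P -> P u -> P v -> P (u - v).
Proof. by move=> sP Pu Pv; apply: subspD => //; apply: subspN. Qed.

Lemma subsp_sum P n (F : 'I_n -> X) : subsp P -> (forall i, P (F i)) ->
  P (\sum_(i < n) F i).
Proof.
move=> sP HF; elim/big_ind: _ => //; first by case: sP.
by move=> a b; apply: subspD.
Qed.

Lemma lin_span_sub (A : set X) : subsp (lin_span A).
Proof.
split; first by exists 0%N, (fun _ => 0), (fun _ => 0); split; [case|rewrite big_ord0].
move=> a u v [n [c [s [As ->]]]] [m [d [t [At ->]]]].
exists (n + m)%N.
exists (fun i => match fintype.split i with inl j => a * c j | inr j => d j end).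
exists (fun i => match fintype.split i with inl j => s j | inr j => t j end).
split.
  by move=> i; case: (fintype.split i).
rewrite big_split_ord /= scaler_sumr; congr (_ + _); apply: eq_bigr => i _.
  by rewrite (unsplitK (inl i)) scalerA.
by rewrite (unsplitK (inr i)).
Qed.

Lemma lin_span_ext (A : set X) : A `<=` lin_span A.
Proof.
move=> v Av; exists 1%N, (fun _ => 1), (fun _ => v); split => //.
by rewrite big_ord1 scale1r.
Qed.

Lemma lin_span_min (A P : set X) : subsp P -> A `<=` P -> lin_span A `<=` P.
Proof.
move=> sP AP v [n [c [s [As ->]]]].
apply: subsp_sum => // i; apply: subspZ => //; exact: AP.
Qed.

Lemma lin_span_mono (A B : set X) : A `<=` B -> lin_span A `<=` lin_span B.
Proof.
move=> AB; apply: lin_span_min; first exact: lin_span_sub.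
by move=> v /AB; apply: lin_span_ext.
Qed.

Lemma closure_normP (A : set X) p :
  closure A p <-> forall e : R, 0 < e -> exists a, A a /\ `|p - a| < e.
Proof.
split.
  move=> Hc e e0.
  have : nbhs p (ball p e) by apply: nbhsx_ballx.
  move=> /Hc [a [Aa]]; rewrite -ball_normE /= => pa.
  by exists a.
move=> H B /nbhs_normP [e /= e0 HB].
have [a [Aa pa]] := H e e0.
by exists a; split => //; apply: HB.
Qed.

Lemma closure_subsp (P : set X) : subsp P -> subsp (closure P).
Proof.
move=> sP; split.
  by apply: subset_closure; case: sP.
move=> a u v /closure_normP Hu /closure_normP Hv; apply/closure_normP => e e0.
have e20 : 0 < e / 2 by rewrite divr_gt0.
have ea0 : 0 < e / 2 / (`|a| + 1) by rewrite divr_gt0 // ltr_wpDl.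
have [u' [Pu' uu']] := Hu _ ea0.
have [v' [Pv' vv']] := Hv _ e20.
exists (a *: u' + v'); split; first by case: sP => _; apply.
have -> : a *: u + v - (a *: u' + v') = a *: (u - u') + (v - v').
  by rewrite scalerBr; rewrite opprD !addrA; congr (_ + _); rewrite addrAC.
apply: (le_lt_trans (ler_normD _ _)).
rewrite normrZ (splitr e) ltr_leD //.
have -> : e / 2 = (`|a| + 1) * (e / 2 / (`|a| + 1)).
  by rewrite [RHS]mulrC divfK // gt_eqF // ltr_wpDl.
apply: (le_lt_trans (y := (`|a| + 1) * `|u - u'|)).
  by rewrite ler_wpM2r // lerDl.
by rewrite ltr_pM2l // ltr_wpDl.
exact: ltW.
Qed.

Lemma closed_span_sub (A : set X) : subsp (closed_span A).
Proof. by apply: closure_subsp; apply: lin_span_sub. Qed.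

Lemma closed_span_ext (A : set X) : A `<=` closed_span A.
Proof. by move=> v Av; apply: subset_closure; apply: lin_span_ext. Qed.

Lemma closed_span_mono (A B : set X) : A `<=` B -> closed_span A `<=` closed_span B.
Proof. by move=> AB; apply: closure_subset; apply: lin_span_mono. Qed.

End Span.

Section HBanach.
Context {R : realType} {X : normedModType R}.
Variable p : X.

Definition good (G : set (X * R)) :=
  [/\ (forall v a b, G (v, a) -> G (v, b) -> a = b),
      G (0, 0),
      (forall t u a v b, G (u, a) -> G (v, b) -> G (t *: u + v, t * a + b)),
      (forall v a, G (v, a) -> a <= `|v|) &
      G (p, `|p|)].

Definition G0 : set (X * R) := [set q | exists t : R, q = (t *: p, t * `|p|)].

Lemma good_G0 : good G0.
Proof.
split.
- move=> v a b [t [-> ->]] [s [E ->]].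
  have [p0|p0] := eqVneq p 0; first by rewrite p0 normr0 !mulr0.
  move/eqP: E; rewrite -subr_eq0 -scalerBl scaler_eq0 (negbTE p0) orbF subr_eq0.
  by move=> /eqP ->.
- by exists 0; rewrite scale0r mul0r.
- move=> t u a v b [s [-> ->]] [r [-> ->]]; exists (t * s + r).
  by rewrite scalerDl scalerA mulrDl mulrA.
- move=> v a [t [-> ->]]; rewrite normrZ ler_wpM2r //; exact: ler_norm.
- by exists 1; rewrite scale1r mul1r.
Qed.

Lemma good_scale G w b s : good G -> G (w, b) -> G (s *: w, s * b).
Proof.
move=> [_ G00 Gc _ _] Gwb; have := Gc s w b 0 0 Gwb G00.
by rewrite addr0 addr0.
Qed.

Lemma good_fun0 G b : good G -> G (0, b) -> b = 0.
Proof. by move=> [Gf G00 _ _ _] Gb; apply: Gf Gb G00. Qed.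

Lemma good_ext G v : good G -> ~ (exists a, G (v, a)) ->
  exists B, good B /\ G `<=` B /\ ~ (B `<=` G).
Proof.
move=> gG nv; have gG' := gG; case: gG' => Gf G00 Gc Gb Gp.
pose S := [set y | exists w b, G (w, b) /\ y = b - `|w - v|].
have key : forall w1 b1 w2 b2, G (w1, b1) -> G (w2, b2) ->
    b1 - `|w1 - v| <= `|w2 + v| - b2.
  move=> w1 b1 w2 b2 G1 G2.
  have := Gb _ _ (Gc 1 _ _ _ _ G1 G2); rewrite scale1r mul1r => H.
  rewrite lerBrDr addrAC lerBlDr.
  apply: (le_trans H).
  have -> : w1 + w2 = (w2 + v) + (w1 - v) by rewrite addrACA addrN addr0 addrC.
  exact: ler_normD.
have S0 : S !=set0 by exists (0 - `|0 - v|), 0, 0.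
have Sub : ubound S (`|0 + v| - 0).
  by move=> y [w [b [Gwb ->]]]; apply: key.
pose c := sup S.
have c1 : forall w b, G (w, b) -> b - `|w - v| <= c.
  move=> w b Gwb; apply: sup_upper_bound; first by split => //; exists (`|0 + v| - 0).
  by exists w, b.
have c2 : forall w b, G (w, b) -> c <= `|w + v| - b.
  move=> w b Gwb; apply: ge_sup => // y [w1 [b1 [G1 ->]]]; exact: key.
pose B := [set q | exists w b (t : R), G (w, b) /\ q = (w + t *: v, b + t * c)].
exists B; split; last split.
- split.
  + move=> u a1 a2 [w1 [b1 [t1 [G1 [E1 ->]]]]] [w2 [b2 [t2 [G2 [E2 ->]]]]].
    have Et : t1 = t2.
      have [//|tne] := eqVneq t1 t2; exfalso; apply: nv.
      have tn0 : t1 - t2 != 0 by rewrite subr_eq0.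
      exists ((t1 - t2)^-1 * (b2 - b1)).
      have -> : v = (t1 - t2)^-1 *: (w2 - w1).
        apply: (@scalerI _ _ (t1 - t2)) => //.
        rewrite scalerA divff // scale1r scalerBl.
        apply: (@addrI _ w1); rewrite addrA -E1 E2 addrK addrC subrK //.
      apply: good_scale => //.
      have := Gc (-1) _ _ _ _ G1 G2.
      by rewrite scaleN1r mulN1r addrC [_ + b2]addrC.
    subst t2; move: E2; rewrite E1 => /addIr E2; subst w2.
    by rewrite (Gf _ _ _ G1 G2).
  + by exists 0, 0, 0; rewrite scale0r mul0r !addr0.
  + move=> s u a u' a' [w1 [b1 [t1 [G1 [-> ->]]]]] [w2 [b2 [t2 [G2 [-> ->]]]]].
    exists (s *: w1 + w2), (s * b1 + b2), (s * t1 + t2); split; first exact: Gc.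
    congr (_, _).
      by rewrite scalerDr scalerDl scalerA !addrA; congr (_ + _); rewrite addrAC.
    by rewrite mulrDr mulrDl mulrA !addrA; congr (_ + _); rewrite addrAC.
  + move=> u a [w [b [t [Gwb [-> ->]]]]].
    have [t0|t0|->] := ltgtP t 0.
    *
      have s0 : 0 < - t by rewrite oppr_gt0.
      have H := c1 _ _ (good_scale (- t)^-1 gG Gwb).
      have F := H; rewrite -(ler_pM2l s0) mulrBr mulrA divff ?gt_eqF // mul1r in F.
      have E : (- t) * `|(- t)^-1 *: w - v| = `|w + t *: v|.
        rewrite -[X in X * _](@ger0_norm _ (- t)); last exact: ltW.
        by rewrite -normrZ scalerBr scalerA divff ?gt_eqF // scale1r scaleNr opprK.
      rewrite E in F; rewrite mulNr in F; lra.
    *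
      have H := c2 _ _ (good_scale t^-1 gG Gwb).
      have F := H; rewrite -(ler_pM2l t0) mulrBr mulrA divff ?gt_eqF // mul1r in F.
      have E : t * `|t^-1 *: w + v| = `|w + t *: v|.
        rewrite -[X in X * _](@ger0_norm _ t); last exact: ltW.
        by rewrite -normrZ scalerDr scalerA divff ?gt_eqF // scale1r.
      rewrite E in F; lra.
    * by rewrite scale0r mul0r !addr0; apply: Gb.
  + by exists p, `|p|, 0; rewrite scale0r mul0r !addr0.
- by move=> [w b] Gwb; exists w, b, 0; rewrite scale0r mul0r !addr0.
- move=> BG; apply: nv; exists c.
  have : B (v, c) by exists 0, 0, 1; rewrite scale1r mul1r !add0r.
  by move/BG.
Qed.

Lemma good_union (F : set (set (X * R))) :
  (forall M, F M -> good (M `|` G0)) ->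
  total_on F subset ->
  good ((\bigcup_(M in F) M) `|` G0).
Proof.
move=> FP Ftot.
set U := _ `|` G0.
have two : forall q1 q2, U q1 -> U q2 -> exists H, [/\ good H, H `<=` U, H q1 & H q2].
  have G0U : G0 `<=` U by move=> q; right.
  move=> q1 q2 [[M1 FM1 M1q]|G0q1] [[M2 FM2 M2q]|G0q2].
  - have [M12|M21] := Ftot _ _ FM1 FM2.
    + exists (M2 `|` G0); split; first exact: FP.
      * by move=> q [Mq|Gq]; [left; exists M2|right].
      * by left; apply: M12.
      * by left.
    + exists (M1 `|` G0); split; first exact: FP.
      * by move=> q [Mq|Gq]; [left; exists M1|right].
      * by left.
      * by left; apply: M21.
  - exists (M1 `|` G0); split; first exact: FP.
    * by move=> q [Mq|Gq]; [left; exists M1|right].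
    * by left.
    * by right.
  - exists (M2 `|` G0); split; first exact: FP.
    * by move=> q [Mq|Gq]; [left; exists M2|right].
    * by right.
    * by left.
  - by exists G0; split => //; exact: good_G0.
split.
- move=> v a b Ua Ub; have [H [[Hf _ _ _ _] _ Ha Hb]] := two _ _ Ua Ub.
  exact: Hf Ha Hb.
- by right; exists 0; rewrite scale0r mul0r.
- move=> t u a v b Ua Ub; have [H [[_ _ Hc _ _] HU Ha Hb]] := two _ _ Ua Ub.
  by apply: HU; apply: Hc.
- move=> v a Ua; have [H [[_ _ _ Hb _] _ Ha _]] := two _ _ Ua Ua.
  exact: Hb Ha.
- by right; exists 1; rewrite scale1r mul1r.
Qed.

Lemma hahn_banach_norm : exists f : X -> R,
  [/\ (forall a u v, f (a *: u + v) = a * f u + f v),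
      (forall v, `|f v| <= `|v|) & f p = `|p|].
Proof.
have [A [PA Amax]] := @Zorn_bigcup (X * R) (fun G => good (G `|` G0))
  (fun F FP Ftot => good_union (fun M FM => FP M FM) Ftot).
set H := A `|` G0 in PA.
have Hmax : forall v, exists a, H (v, a).
  move=> v; apply: contrapT => nv.
  have [B [gB [HB nBH]]] := good_ext PA nv.
  apply: (Amax B).
    split; first by move=> q Aq; apply: HB; left.
    move=> BA; apply: nBH => q Bq; left; exact: BA.
  have -> : B `|` G0 = B.
    apply/seteqP; split => q; last by left.
    by case => // Gq; apply: HB; right.
  exact: gB.
have [f Hf] := choice Hmax.
case: PA => Hf1 H00 Hc Hb Hp.
have lin : forall a u v, f (a *: u + v) = a * f u + f v.
  by move=> a u v; apply: Hf1 (Hf _) (Hc _ _ _ _ _ (Hf u) (Hf v)).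
exists f; split => //.
- move=> v; rewrite ler_norml; apply/andP; split; last exact: Hb (Hf v).
  have f0 : f 0 = 0 by apply: Hf1 (Hf 0) H00.
  have E := lin (-1) v 0; rewrite addr0 f0 addr0 scaleN1r mulN1r in E.
  by rewrite lerNl -E -(normrN v); apply: Hb (Hf (- v)).
- exact: Hf1 (Hf p) Hp.
Qed.

End HBanach.

Section Fin.
Context {R : realType} {X : normedModType R}.

Definition islin (f : X -> R) := forall a u v, f (a *: u + v) = a * f u + f v.
Definition isnf (f : X -> R) := islin f /\ forall v, `|f v| <= `|v|.

Lemma lin0 f : islin f -> f 0 = 0.
Proof.
move=> lf; have := lf 1 0 0; rewrite scale1r addr0 mul1r => E.
by apply: (@addrI _ (f 0)); rewrite addr0 -E.
Qed.

Lemma linD f u v : islin f -> f (u + v) = f u + f v.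
Proof. by move=> lf; have := lf 1 u v; rewrite scale1r mul1r. Qed.

Lemma linZ f a u : islin f -> f (a *: u) = a * f u.
Proof. by move=> lf; have := lf a u 0; rewrite addr0 lin0 // addr0. Qed.

Lemma linN f u : islin f -> f (- u) = - f u.
Proof. by move=> lf; rewrite -scaleN1r linZ // mulN1r. Qed.

Lemma linB f u v : islin f -> f (u - v) = f u - f v.
Proof. by move=> lf; rewrite linD // linN. Qed.

Lemma isnf_cont f : isnf f -> continuous f.
Proof.
move=> [lf bf] x; apply/cvgrPdist_lt => e e0.
apply/nbhs_normP; exists e => //= t /= xt.
by rewrite -linB //; apply: le_lt_trans (bf _) xt.
Qed.

Definition lspan (L : seq X) := lin_span [set v | v \in L].

Lemma lspan_sub L : subsp (lspan L).
Proof. exact: lin_span_sub. Qed.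

Lemma lspan_mem L v : v \in L -> lspan L v.
Proof. by move=> vL; apply: lin_span_ext. Qed.

Lemma lspan_nil e : lspan [::] e -> e = 0.
Proof.
move=> He; have : [set (0 : X)] e; last by [].
apply: (lin_span_min _ _ He) => //.
by split => // a u v -> ->; rewrite scaler0 addr0.
Qed.

Lemma lspan_cons v L e : lspan (v :: L) e -> exists t w, lspan L w /\ e = t *: v + w.
Proof.
move=> He.
pose P := [set e | exists t w, lspan L w /\ e = t *: v + w].
apply: (lin_span_min (P := P)) He.
  split; first by exists 0, 0; split; [case: (lspan_sub L)|rewrite scale0r addr0].
  move=> a x y [t [w [Lw ->]]] [s [z [Lz ->]]].
  exists (a * t + s), (a *: w + z); split; first by case: (lspan_sub L) => _; apply.
  rewrite scalerDr scalerDl scalerA !addrA; congr (_ + _); rewrite addrAC.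
  by rewrite -!addrA; congr (_ + _); rewrite addrC.
move=> y /=; rewrite inE => /orP [/eqP ->|yL].
  by exists 1, 0; split; [case: (lspan_sub L)|rewrite scale1r addr0].
by exists 0, y; split; [apply: lspan_mem|rewrite scale0r add0r].
Qed.

Lemma lspan_monoL L L' : {subset L <= L'} -> lspan L `<=` lspan L'.
Proof. by move=> LL'; apply: lin_span_mono => v /= /LL'. Qed.

Lemma lspan_cons_inv v L t w : lspan L w -> lspan (v :: L) (t *: v + w).
Proof.
move=> Lw; case: (lspan_sub (v :: L)) => _; apply.
  by apply: lspan_mem; rewrite inE eqxx.
by apply: (lspan_monoL (L := L)) => // y yL; rewrite inE yL orbT.
Qed.

Lemma grid_aux (h : R) : 0 < h -> forall (N : nat) (a : R), exists ts : seq R,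
  forall t, a <= t <= a + N%:R * h -> exists2 s, s \in ts & `|t - s| <= h.
Proof.
move=> h0; elim=> [|N IH] a.
  exists [:: a] => t; rewrite mul0r addr0 -eq_le => /eqP <-.
  by exists a; rewrite ?inE ?subrr ?normr0 //; apply: ltW.
have [ts Hts] := IH (a + h); exists (a :: ts) => t /andP [at1 at2].
have [tah|tah] := leP t (a + h).
  exists a; first by rewrite inE eqxx.
  by rewrite ger0_norm ?subr_ge0 // lerBlDl.
have [s sts Hs] : exists2 s, s \in ts & `|t - s| <= h.
  by apply: Hts; rewrite (ltW tah) /=; move: at2; rewrite -nat1r mulrDl mul1r addrA.
by exists s => //; rewrite inE sts orbT.
Qed.

Lemma grid (T h : R) : 0 < h -> exists ts : seq R,
  forall t, `|t| <= T -> exists2 s, s \in ts & `|t - s| <= h.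
Proof.
move=> h0.
have [T0|T0] := leP 0 T; last first.
  by exists [::] => t tT; exfalso; move: (le_lt_trans (normr_ge0 t) (le_lt_trans tT T0)); rewrite ltxx.
pose N := Num.Def.archi_bound (2 * T / h).
have HN : 2 * T / h < N%:R by apply: archi_boundP; apply: divr_ge0; [apply: mulr_ge0 => //|apply: ltW].
have [ts Hts] := grid_aux h0 N (- T); exists ts => t tT; apply: Hts.
move: tT; rewrite ler_norml => /andP [t1 t2]; rewrite t1 /=.
have : 2 * T < N%:R * h by rewrite -ltr_pdivrMr.
lra.
Qed.

Lemma tot_bounded (L : seq X) : forall r eta : R, 0 < eta ->
  exists ps : seq X, forall e, lspan L e -> `|e| <= r ->
    exists2 q, q \in ps & `|e - q| <= eta.
Proof.
elim: L => [|v L IH] r eta eta0.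
  exists [:: 0] => e /lspan_nil -> _; exists 0; first by rewrite inE.
  by rewrite subr0 normr0 ltW.
have eta20 : 0 < eta / 2 by rewrite divr_gt0.
have [[d [d0 Hd]]|nd] := pselect (exists d : R, 0 < d /\ forall w, lspan L w -> d <= `|v - w|).
  have Htd : forall t w, lspan L w -> `|t| * d <= `|t *: v + w|.
    move=> t w Lw; have [->|t0] := eqVneq t 0; first by rewrite normr0 mul0r.
    have -> : t *: v + w = t *: (v - (- t^-1 *: w)).
      by rewrite scaleNr opprK scalerDr scalerA divff // scale1r.
    rewrite normrZ ler_pM2l ?normr_gt0 //; apply: Hd.
    by apply: subspZ => //; apply: lspan_sub.
  pose T := r / d.
  have [ps Hps] := IH (r + T * `|v|) (eta / 2) eta20.
  have h0 : 0 < eta / 2 / (`|v| + 1) by rewrite divr_gt0 // ltr_wpDl.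
  have [ts Hts] := grid T h0.
  exists [seq s *: v + q | s <- ts, q <- ps] => e /lspan_cons [t [w [Lw ->]]] er.
  have tT : `|t| <= T.
    rewrite /T ler_pdivlMr //; exact: le_trans (Htd _ _ Lw) er.
  have wr : `|w| <= r + T * `|v|.
    have -> : w = (t *: v + w) - t *: v by rewrite addrC addKr.
    apply: (le_trans (ler_normB _ _)); rewrite normrZ lerD //.
    by rewrite ler_wpM2r.
  have [s sts Hs] := Hts _ tT.
  have [q qps Hq] := Hps _ Lw wr.
  exists (s *: v + q); first exact: allpairs_f.
  have -> : t *: v + w - (s *: v + q) = (t - s) *: v + (w - q).
    by rewrite scalerBl opprD !addrA; congr (_ + _); rewrite addrAC.
  apply: (le_trans (ler_normD _ _)); rewrite normrZ (splitr eta) lerD //.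
  have : `|t - s| * `|v| <= eta / 2 / (`|v| + 1) * `|v| by rewrite ler_wpM2r.
  move=> H; apply: (le_trans H).
  rewrite mulrAC ler_pdivrMr ?ltr_wpDl // ler_pM2l // lerDl //.
have [ps Hps] := IH (r + eta / 2) (eta / 2) eta20.
exists ps => e /lspan_cons [t [w [Lw ->]]] er.
have dd0 : 0 < eta / 2 / (`|t| + 1) by rewrite divr_gt0 // ltr_wpDl.
have [w0 [Lw0 vw0]] : exists w0, lspan L w0 /\ `|v - w0| < eta / 2 / (`|t| + 1).
  apply: contrapT => H; apply: nd; exists (eta / 2 / (`|t| + 1)); split => //.
  move=> w1 Lw1; rewrite leNgt; apply/negP => H1; apply: H; by exists w1.
have close : `|t *: v + w - (t *: w0 + w)| <= eta / 2.
  rewrite opprD addrACA addrN addr0 -scalerBr normrZ.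
  have : `|t| * `|v - w0| <= (`|t| + 1) * (eta / 2 / (`|t| + 1)).
    apply: ler_pM => //; first by rewrite lerDl.
    exact: ltW.
  by rewrite [X in _ <= X -> _]mulrC divfK // gt_eqF // ltr_wpDl.
have Le' : lspan L (t *: w0 + w).
  by case: (lspan_sub L) => _; apply.
have e'r : `|t *: w0 + w| <= r + eta / 2.
  have := ler_distD (t *: v + w) (t *: w0 + w) 0; rewrite !subr0.
  move=> H; apply: (le_trans H); rewrite addrC lerD //.
  by rewrite -normrN opprB.
have [q qps Hq] := Hps _ Le' e'r.
exists q => //.
have := ler_distD (t *: w0 + w) (t *: v + w) q.
move=> H; apply: (le_trans H); rewrite (splitr eta) lerD //.
Qed.

Lemma norming (L : seq X) (eta : R) : 0 < eta ->
  exists (m : nat) (fs : nat -> X -> R), (forall i, isnf (fs i)) /\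
    forall e, lspan L e -> exists i, (i < m)%N /\ (1 - eta) * `|e| <= fs i e.
Proof.
move=> eta0.
have [F HF] := choice (fun q : X => hahn_banach_norm q).
have eta20 : 0 < eta / 2 by rewrite divr_gt0.
have [ps Hps] := tot_bounded L 1 eta20.
exists (size ps), (fun i => F (nth 0 ps i)); split.
  by move=> i; have [H1 H2 _] := HF (nth 0 ps i); split.
move=> e Le.
have [->|e0] := eqVneq e 0.
  have [q qps _] : exists2 q, q \in ps & `|0 - q| <= eta / 2.
    by apply: Hps; [case: (lspan_sub L)|rewrite normr0].
  exists (index q ps); split; first by rewrite index_mem.
  have [H1 _ _] := HF (nth 0 ps (index q ps)).
  by rewrite normr0 mulr0 lin0.
have ne0 : 0 < `|e| by rewrite normr_gt0.
pose e' := `|e|^-1 *: e.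
have Le' : lspan L e' by apply: subspZ => //; apply: lspan_sub.
have ne' : `|e'| = 1 by rewrite normrZ normfV normr_id mulVf // gt_eqF.
have [q qps Hq] : exists2 q, q \in ps & `|e' - q| <= eta / 2.
  by apply: Hps; rewrite ?ne'.
exists (index q ps); split; first by rewrite index_mem.
rewrite nth_index //.
have [H1 H2 H3] := HF q.
have Fe : F q e = `|e| * F q e'.
  by rewrite linZ // mulrA divff ?gt_eqF // mul1r.
rewrite Fe [X in X <= _]mulrC ler_pM2l //.
have : F q e' = F q q - F q (q - e') by rewrite linB // opprB addrC subrK.
move=> ->.
have := H2 (q - e'); rewrite ler_norml => /andP [_ Hb].
have A : `|e'| - `|e' - q| <= `|q|.
  have E : e' - (e' - q) = q by rewrite opprB addrC subrK.
  by have := lerB_dist e' (e' - q); rewrite E.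
rewrite ne' in A; rewrite distrC in Hb; rewrite H3.
lra.
Qed.

End Fin.

Fixpoint dc_seq (T : Type) (g : nat -> seq T -> T) (m : nat) : seq T :=
  if m is m'.+1 then rcons (dc_seq g m') (g m' (dc_seq g m')) else [::].

Lemma build_seq (T : Type) (P : nat -> seq T -> T -> Prop) :
  (forall m s, exists x, P m s x) -> exists tau : nat -> T, forall m, P m (mkseq tau m) (tau m).
Proof.
move=> H.
have [g Hg] := choice (fun q : nat * seq T => H q.1 q.2).
pose g' m s := g (m, s).
exists (fun m => g' m (dc_seq g' m)) => m.
have E : forall m, dc_seq g' m = mkseq (fun m => g' m (dc_seq g' m)) m.
  by elim=> [//|n IH]; rewrite mkseqS /= -IH.
by rewrite -E; apply: (Hg (m, dc_seq g' m)).
Qed.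

Definition incr (s : nat -> nat) := forall m n, (m < n)%N -> (s m < s n)%N.

Lemma incrS s : (forall n, (s n < s n.+1)%N) -> incr s.
Proof.
move=> H m n; elim: n => [//|n IH]; rewrite ltnS leq_eqVlt => /orP [/eqP ->|/IH h].
  exact: H.
exact: ltn_trans h (H n).
Qed.

Lemma incr_ge s : incr s -> forall n, (n <= s n)%N.
Proof. by move=> H; elim=> [//|n IH]; apply: leq_ltn_trans IH (H _ _ (ltnSn n)). Qed.

Lemma incr_comp s t : incr s -> incr t -> incr (s \o t).
Proof. by move=> Hs Ht m n mn; apply: Hs; apply: Ht. Qed.

Section Mazur.
Context {R : realType} {X : normedModType R}.
Variables (u : nat -> X) (eps : R).
Hypothesis eps0 : 0 < eps.
Hypothesis ueps : forall k, eps <= `|u k|.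
Hypothesis WN : forall f : X -> R, isnf f -> forall r : R, 0 < r ->
  exists N, forall k, (N <= k)%N -> `|f (u k)| < r.

Lemma eventually_all (m : nat) (fs : nat -> X -> R) r :
  (forall i, isnf (fs i)) -> 0 < r ->
  exists N, forall k, (N <= k)%N -> forall i, (i < m)%N -> `|fs i (u k)| < r.
Proof.
move=> Hf r0; elim: m => [|m [N HN]]; first by exists 0%N.
have [N' HN'] := WN (Hf m) r0.
exists (maxn N N') => k; rewrite geq_max => /andP [k1 k2] i; rewrite ltnS leq_eqVlt.
by case/orP => [/eqP ->|im]; [apply: HN'|apply: HN].
Qed.

Lemma mazur_step (L : seq X) (d : R) (N : nat) : 0 < d ->
  exists k, (N <= k)%N /\ forall e t, lspan L e -> (1 - d) * `|e| <= `|e + t *: u k|.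
Proof.
move=> d0.
have d20 : 0 < d / 2 by rewrite divr_gt0.
have [m [fs [Hfs Hn]]] := norming L d20.
have r0 : 0 < d * eps / 4 by rewrite divr_gt0 // mulr_gt0.
have [N0 HN0] := eventually_all m Hfs r0.
exists (maxn N N0); split; first by rewrite leq_maxl.
move=> e t Le; set w := u (maxn N N0).
have we : eps <= `|w| := ueps _.
have ne : 0 <= `|e| := normr_ge0 _.
have nt : 0 <= `|t| := normr_ge0 _.
have [big|small] := leP (2 * `|e|) (`|t| * eps).
  have H1 : `|t *: w| - `|e| <= `|e + t *: w|.
    by rewrite [e + _]addrC; apply: lerB_normD.
  rewrite normrZ in H1.
  have : `|t| * eps <= `|t| * `|w| by apply: ler_wpM2l.
  nra.
have [i [im Hi]] := Hn e Le.
have Hfw := HN0 (maxn N N0) (leq_maxr _ _) i im.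
have [lf bf] := Hfs i.
have H1 : fs i (e + t *: w) <= `|e + t *: w|.
  by apply: le_trans (bf _); apply: ler_norm.
rewrite linD // linZ // in H1.
have H2 : - (`|t| * `|fs i w|) <= t * fs i w.
  by have := ler_norm (- (t * fs i w)); rewrite normrN normrM; lra.
have H3 : `|t| * `|fs i w| <= `|t| * (d * eps / 4) by apply: ler_wpM2l => //; apply: ltW.
nra.
Qed.

Definition aa (m : nat) : R := ((2 : R) ^+ m.+1)^-1.

Lemma aa_gt0 m : 0 < aa m.
Proof. by rewrite invr_gt0 exprn_gt0. Qed.

Lemma aa_le m : aa m <= 1 / 2.
Proof.
rewrite /aa exprS invfM mul1r.
have h1 : 1 <= (2:R) ^+ m by apply: exprn_ege1; rewrite ler1n.
have h2 : ((2:R) ^+ m)^-1 <= 1 by rewrite invf_le1 // (lt_le_trans ltr01 h1).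
have h3 : 0 <= (2:R)^-1 by rewrite invr_ge0.
by rewrite -[leRHS]mulr1 ler_wpM2l.
Qed.

Lemma aaS m : aa m.+1 = aa m / 2.
Proof. by rewrite /aa exprS invfM mulrC. Qed.

Lemma chain (L0 : seq X) (tau : nat -> nat) :
  (forall m e t, lspan (L0 ++ map u (mkseq tau m)) e ->
     (1 - aa m / 2) * `|e| <= `|e + t *: u (tau m)|) ->
  forall m (c : nat -> R) e, lspan L0 e ->
    (1 / 2 + aa m) * `|e| <= `|e + \sum_(j < m) c j *: u (tau j)|.
Proof.
move=> Ht; elim=> [|m IH] c e Le.
  by rewrite big_ord0 addr0 /aa expr1 -[X in _ + X]mul1r -splitr mul1r.
rewrite big_ord_recr /= addrA.
have Lm : lspan (L0 ++ map u (mkseq tau m)) (e + \sum_(j < m) c j *: u (tau j)).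
  apply: subspD; first exact: lspan_sub.
    by apply: lspan_monoL Le => v vL; rewrite mem_cat vL.
  apply: subsp_sum; first exact: lspan_sub.
  move=> j; apply: subspZ; first exact: lspan_sub.
  apply: lspan_mem; rewrite mem_cat; apply/orP; right.
  by apply: map_f; rewrite /mkseq; apply: map_f; rewrite mem_iota add0n ltn_ord.
have H1 := Ht m _ (c m) Lm.
have H2 := IH c e Le.
have a0 := aa_gt0 m; have a1 := aa_le m.
rewrite aaS.
have ne : 0 <= `|e| := normr_ge0 _.
set W := `|_ + c m *: _| in H1 *.
set V := `|e + _| in H1 H2.
have : (1 - aa m / 2) * ((1 / 2 + aa m) * `|e|) <= (1 - aa m / 2) * V.
  by apply: ler_wpM2l => //; lra.
have K : 0 <= aa m * (1 / 4 - aa m / 2) * `|e|.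
  by apply: mulr_ge0 => //; apply: mulr_ge0; lra.
lra.
Qed.

End Mazur.

Section Decomp.
Context {R : realType} {X : normedModType R}.

Lemma sum_widen (f : nat -> X) (c : nat -> R) m M : (m <= M)%N ->
  \sum_(j < M) (if (j < m)%N then c j else 0) *: f j = \sum_(j < m) c j *: f j.
Proof.
move=> mM; rewrite (big_ord_widen M (fun j => c j *: f j) mM) [RHS]big_mkcond /=.
by apply: eq_bigr => i _; case: ifP => _ //; rewrite scale0r.
Qed.

Lemma decomp (A : set X) (f : nat -> X) v :
  lin_span (A `|` range f) v ->
  exists g m (c : nat -> R), lin_span A g /\ v = g + \sum_(j < m) c j *: f j.
Proof.
move=> Hv.
pose P := [set v | exists g m (c : nat -> R), lin_span A g /\ v = g + \sum_(j < m) c j *: f j].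
apply: (lin_span_min (P := P)) Hv.
  split.
    exists 0, 0%N, (fun _ => 0); split; last by rewrite big_ord0 addr0.
    by case: (lin_span_sub A).
  move=> a x y [g1 [m1 [c1 [A1 ->]]]] [g2 [m2 [c2 [A2 ->]]]].
  exists (a *: g1 + g2), (maxn m1 m2).
  exists (fun j => a * (if (j < m1)%N then c1 j else 0) + (if (j < m2)%N then c2 j else 0)).
  split; first by case: (lin_span_sub A) => _; apply.
  rewrite -(sum_widen f c1 (leq_maxl m1 m2)) -(sum_widen f c2 (leq_maxr m1 m2)).
  rewrite scalerDr scaler_sumr -!addrA; congr (_ + _).
  rewrite addrCA; congr (_ + _).
  rewrite -big_split /=; apply: eq_bigr => j _.
  by rewrite scalerDl scalerA.
move=> y [Ay|[k _ <-]].
  exists y, 0%N, (fun _ => 0); split; first exact: lin_span_ext.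
  by rewrite big_ord0 addr0.
exists 0, k.+1, (fun j => if j == k then 1 else 0); split.
  by case: (lin_span_sub A).
rewrite add0r big_ord_recr /= eqxx scale1r big1 ?add0r // => j _.
by rewrite (ltn_eqF (ltn_ord j)) scale0r.
Qed.

End Decomp.

Section OneStep.
Context {R : realType} {X : normedModType R}.
Variables (y : nat -> X) (l : X) (eps : R).
Hypothesis eps0 : 0 < eps.
Hypothesis yeps : forall k, eps <= `|y k - l|.
Hypothesis weak : forall f : X -> R, isnf f -> forall r : R, 0 < r ->
  exists N, forall k, (N <= k)%N -> `|f (y k) - f l| < r.

Lemma one_step (sigma : nat -> nat) (F : seq X) : incr sigma ->
  exists a tau, [/\ incr tau, (forall j, (a < tau j)%N) &
    ~ closure (lin_span ([set v | v \in F] `|` range (y \o sigma \o tau))) (y (sigma a))].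
Proof.
move=> isig.
pose u k := y (sigma k) - l.
have ueps : forall k, eps <= `|u k| by move=> k; apply: yeps.
have WN : forall f : X -> R, isnf f -> forall r : R, 0 < r ->
    exists N, forall k, (N <= k)%N -> `|f (u k)| < r.
  move=> f nf r r0; have [N HN] := weak nf r0; exists N => k Nk.
  rewrite /u linB; last by case: nf.
  by apply: HN; apply: leq_trans Nk (incr_ge isig k).
pose G := l :: F.
have h20 : 0 < (1 : R) / 2 by rewrite mul1r invr_gt0.
have [a [_ Ha]] := mazur_step eps0 ueps WN G 0%N h20.
have dist : forall g, lspan G g -> eps / 3 <= `|g + u a|.
  move=> g Lg; have := Ha g 1 Lg; rewrite scale1r => H1.
  have H2 : `|u a| - `|g| <= `|g + u a| by rewrite [g + _]addrC; apply: lerB_normD.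
  have := ueps a; have := normr_ge0 g; lra.
pose L0 := u a :: G.
pose P (m : nat) (s : seq nat) (k : nat) :=
  (last a s < k)%N /\ forall e t, lspan (L0 ++ map u s) e ->
     (1 - aa m / 2) * `|e| <= `|e + t *: u k|.
have [tau Htau] : exists tau : nat -> nat, forall m, P m (mkseq tau m) (tau m).
  apply: build_seq => m s.
  have d0 : 0 < aa m / 2 :> R by rewrite divr_gt0 // aa_gt0.
  have [k [k1 k2]] := mazur_step eps0 ueps WN (L0 ++ map u s) (last a s).+1 d0.
  by exists k.
have itau : incr tau.
  apply: incrS => n; have [H _] := Htau n.+1.
  by rewrite mkseqS last_rcons in H.
have atau : forall j, (a < tau j)%N.
  move=> j; have [H _] := Htau 0%N; rewrite /= in H.
  case: j => [//|j]; apply: ltn_trans H (itau _ _ _) => //.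
exists a, tau; split => // Hcl.
have e60 : 0 < eps / 6 by rewrite divr_gt0.
have [v [Hv Hva]] := (closure_normP _ _).1 Hcl _ e60.
have [g [m [c [Ag Ev]]]] := decomp Hv.
pose C := \sum_(j < m) c j.
pose e := u a + (l - g - C *: l).
have Le : lspan L0 e.
  have sL0 := lspan_sub L0.
  apply: subspD => //; first by apply: lspan_mem; rewrite inE eqxx.
  apply: subspB => //; first apply: subspB => //.
  - by apply: lspan_mem; rewrite !inE eqxx orbT.
  - by apply: lspan_monoL Ag => w wF; rewrite !inE wF !orbT.
  - by apply: subspZ => //; apply: lspan_mem; rewrite !inE eqxx orbT.
have Eid : y (sigma a) - v = e + \sum_(j < m) (- c j) *: u (tau j).
  have Es : \sum_(j < m) (- c j) *: u (tau j) =
      - (\sum_(j < m) c j *: (y \o sigma \o tau) j) + C *: l.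
    rewrite /C scaler_suml -sumrN -big_split /=; apply: eq_bigr => j _.
    by rewrite /u scalerBr scaleNr scaleNr opprK.
  rewrite Es Ev /e /u.
  set S := \sum_(j < m) _.
  rewrite opprD !addrA subrK.
  rewrite [_ - C *: l - S]addrAC subrK //.
have Hch := chain (fun m e t H => (Htau m).2 e t H) m (fun j => - c j) Le.
rewrite -Eid in Hch.
have Hd : eps / 3 <= `|e|.
  rewrite /e addrC; apply: dist.
  apply: subspB; first exact: lspan_sub.
    apply: subspB; first exact: lspan_sub.
      by apply: lspan_mem; rewrite inE eqxx.
    by apply: lspan_monoL Ag => w wF; rewrite inE wF orbT.
  by apply: subspZ; [exact: lspan_sub|apply: lspan_mem; rewrite inE eqxx].
have := aa_gt0 m (R := R).
have := normr_ge0 e.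
nra.
Qed.

End OneStep.

Section Diag.
Context {R : realType} {X : normedModType R}.
Variables (y : nat -> X) (l : X) (eps : R).
Hypothesis eps0 : 0 < eps.
Hypothesis yeps : forall k, eps <= `|y k - l|.
Hypothesis weak : forall f : X -> R, isnf f -> forall r : R, 0 < r ->
  exists N, forall k, (N <= k)%N -> `|f (y k) - f l| < r.
Hypothesis AO : forall phi, incr phi -> finite_codim (closed_span (range (y \o phi))).

Lemma kernel_vec n (M : 'M[R]_(n.+1, n)) : exists c : 'rV[R]_(n.+1), c != 0 /\ c *m M = 0.
Proof.
have rk : (0 < \rank (kermx M))%N.
  by rewrite mxrank_ker subn_gt0 ltnS rank_leq_col.
have : kermx M != 0 by rewrite -mxrank_eq0 -lt0n.
case/eqP/row_matrixP/boolp.existsNP => i Hi.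
exists (row i (kermx M)); split.
  by apply/eqP => E; apply: Hi; rewrite E row0.
by rewrite -row_mul mulmx_ker row0.
Qed.

Lemma subsp_sum_pred (P : set X) n (Q : pred 'I_n) (F : 'I_n -> X) :
  subsp P -> (forall i, Q i -> P (F i)) -> P (\sum_(i < n | Q i) F i).
Proof.
move=> sP HF; apply: big_ind => //; first by case: sP.
by move=> a b; apply: subspD.
Qed.

Definition cur (s : seq ((nat -> nat) * nat)) : nat -> nat := last id (map fst s).
Definition Fs (s : seq ((nat -> nat) * nat)) : seq X := map (fun p => y (p.1 0%N)) s.

Lemma no_diag : False.
Proof.
pose P (j : nat) (s : seq ((nat -> nat) * nat)) (p : (nat -> nat) * nat) :=
  incr (cur s) -> [/\ incr p.1,
     (exists tau, [/\ incr tau, (forall i, (p.2 < tau i)%N) & p.1 = cur s \o tau]) &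
     ~ closure (lin_span ([set v | v \in Fs s] `|` range (y \o p.1))) (y (cur s p.2))].
have [st Hst] : exists st : nat -> (nat -> nat) * nat, forall j, P j (mkseq st j) (st j).
  apply: build_seq => j s.
  have [icur|nis] := pselect (incr (cur s)); last by exists (id, 0%N).
  have [a [tau [itau atau Hcl]]] := one_step eps0 yeps weak (Fs s) icur.
  exists (cur s \o tau, a) => _; split => //=.
  - exact: incr_comp.
  - by exists tau.
pose sig j := cur (mkseq st j).
have sig0 : sig 0%N = id by [].
have sigS : forall j, sig j.+1 = (st j).1.
  by move=> j; rewrite /sig /cur mkseqS map_rcons last_rcons.
have isig : forall j, incr (sig j).
  elim=> [|j IH]; first by rewrite sig0 => m n.
  by rewrite sigS; case: (Hst j IH).
have Hj : forall j, [/\ incr (st j).1,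
     (exists tau, [/\ incr tau, (forall i, ((st j).2 < tau i)%N) & (st j).1 = sig j \o tau]) &
     ~ closure (lin_span ([set v | v \in Fs (mkseq st j)] `|` range (y \o (st j).1)))
         (y (sig j (st j).2))].
  by move=> j; apply: Hst; apply: isig.
have rng1 : forall j k, exists k', sig j.+1 k = sig j k'.
  move=> j k; rewrite sigS; have [_ [tau [_ _ ->]] _] := Hj j.
  by exists (tau k).
have rng : forall j i, (j <= i)%N -> forall k, exists k', sig i k = sig j k'.
  move=> j i ji; elim: i ji => [|i IH]; first by rewrite leqn0 => /eqP -> k; exists k.
  rewrite leq_eqVlt => /orP [/eqP <-|]; first by move=> k; exists k.
  rewrite ltnS => /IH H k; have [k1 ->] := rng1 i k.
  exact: H.
pose Sinf j := (st j).1 0%N.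
have Sinf_sig : forall j, Sinf j = sig j.+1 0%N by move=> j; rewrite sigS.
have iSinf : incr Sinf.
  apply: incrS => j; rewrite !Sinf_sig (sigS j.+1).
  have [_ [tau [_ atau ->]] _] := Hj j.+1.
  rewrite /=; apply: isig.
  by apply: leq_ltn_trans (atau 0%N).
have FsE : forall j, Fs (mkseq st j) = map (fun i => y (Sinf i)) (iota 0 j).
  by move=> j; rewrite /Fs /mkseq -map_comp.
pose W j := closure (lin_span ([set v | v \in Fs (mkseq st j)] `|` range (y \o (st j).1))).
have sW : forall j, subsp (W j) by move=> j; apply: closure_subsp; apply: lin_span_sub.
have ZW : forall j, closed_span (range (y \o Sinf)) `<=` W j.
  move=> j; apply: closure_subset; apply: lin_span_mono => _ [i _ <-] /=.
  have [ij|ji] := ltnP i j.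
    left; rewrite FsE; apply: map_f; by rewrite mem_iota add0n.
  right; rewrite Sinf_sig.
  have [k' ->] := rng j.+1 i.+1 ji 0%N.
  by exists k' => //; rewrite /= sigS.
pose b j := y (sig j (st j).2).
have bW : forall j i, (j < i)%N -> W j (b i).
  move=> j i ji; apply: subset_closure; apply: lin_span_ext; right.
  have [k' Ek] := rng j.+1 i ji (st i).2.
  by exists k' => //; rewrite /b Ek /= sigS.
have nbW : forall j, ~ W j (b j) by move=> j; case: (Hj j).
have [n [e He]] := AO iSinf.
pose Z := closed_span (range (y \o Sinf)).
have sZ : subsp Z by apply: closed_span_sub.
have Hb : forall i : 'I_n.+1, exists zc : X * ('I_n -> R),
    Z zc.1 /\ b i = zc.1 + \sum_(k < n) zc.2 k *: e k.
  by move=> i; have [z [Zz [c Ec]]] := He (b i); exists (z, c).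
have [zc Hzc] := boolp.choice Hb.
pose M : 'M[R]_(n.+1, n) := \matrix_(i, k) (zc i).2 k.
have [c [c0 cM]] := kernel_vec M.
have sumb : \sum_(i < n.+1) c ord0 i *: b i = \sum_(i < n.+1) c ord0 i *: (zc i).1.
  transitivity (\sum_(i < n.+1) c ord0 i *: (zc i).1 +
                \sum_(i < n.+1) c ord0 i *: \sum_(k < n) (zc i).2 k *: e k).
    by rewrite -big_split; apply: eq_bigr => i _; rewrite (Hzc i).2 scalerDr.
  have -> : \sum_(i < n.+1) c ord0 i *: \sum_(k < n) (zc i).2 k *: e k =
            \sum_(k < n) (c *m M) ord0 k *: e k.
    rewrite (eq_bigr (fun i : 'I_n.+1 => \sum_(k < n) (c ord0 i * (zc i).2 k) *: e k));
      last by move=> i _; rewrite scaler_sumr; apply: eq_bigr => k _; rewrite scalerA.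
    rewrite exchange_big /=; apply: eq_bigr => k _; rewrite !mxE scaler_suml.
    by apply: eq_bigr => i _; rewrite mxE.
  by rewrite cM [X in _ + X]big1 ?addr0 // => k _; rewrite mxE scale0r.
have ZS : Z (\sum_(i < n.+1) c ord0 i *: b i).
  rewrite sumb; apply: subsp_sum => // i; apply: (subspZ _ sZ); by case: (Hzc i).
have [i0 ci0] : exists i, c ord0 i != 0.
  apply: contrapT => H; apply: (negP c0); apply/eqP; apply/rowP => i.
  rewrite mxE; apply/eqP; apply: contrapT => Hi; apply: H; by exists i; apply/negP.
pose Pm := fun k : nat => (k < n.+1)%N && (c ord0 (inord k) != 0).
have exPm : exists k, Pm k by exists i0; rewrite /Pm ltn_ord inord_val.
case: (ex_minnP exPm) => j /andP [jn cj] minj.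
pose jo : 'I_n.+1 := inord j.
have jov : nat_of_ord jo = j by rewrite inordK.
have clow : forall i : 'I_n.+1, (i < j)%N -> c ord0 i = 0.
  move=> i ij; apply/eqP; apply: contrapT => /negP ci.
  have : Pm i by rewrite /Pm ltn_ord inord_val.
  by move/minj; rewrite leqNgt ij.
rewrite (bigD1 jo) //= in ZS.
have Wrest : W j (\sum_(i < n.+1 | i != jo) c ord0 i *: b i).
  apply: subsp_sum_pred => // i ijo.
  have [ij|ji] := ltnP i j.
    by rewrite clow // scale0r; case: (sW j).
  apply: (subspZ _ (sW j)); apply: bW.
  rewrite ltn_neqAle ji andbT; apply: contra ijo => /eqP ij.
  by apply/eqP; apply: val_inj; rewrite /= jov.
have Wj : W j (c ord0 jo *: b jo).
  have := subspB (sW j) (ZW j _ ZS) Wrest; by rewrite addrK.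
have Ebj : b j = (c ord0 jo)^-1 *: (c ord0 jo *: b jo) by rewrite scalerA mulVf // scale1r jov.
apply: (nbW j); rewrite Ebj.
exact: (subspZ _ (sW j)).
Qed.

End Diag.

Unset Implicit Arguments.

Theorem lemma5p4 (R : realType) (X : normedModType R) (x : nat -> X) (l : X) :
  almost_overcomplete x -> weak_cvg x l -> x @ \oo --> l.
Proof.
move=> AOx Wx.
apply: contrapT => ncv.
have [eps [eps0 Hne]] : exists eps : R, 0 < eps /\
    forall N, exists n, (N <= n)%N /\ eps <= `|x n - l|.
  apply: contrapT => H; apply: ncv; apply/cvgrPdist_lt => e e0.
  apply: contrapT => Hn; apply: H; exists e; split => // N.
  apply: contrapT => H2; apply: Hn; exists N => // n /= Nn.
  rewrite distrC ltNge; apply/negP => He; apply: H2; by exists n.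
have [phi Hphi] := @build_seq nat
    (fun (m : nat) (s : seq nat) (k : nat) => (last 0%N s < k)%N /\ eps <= `|x k - l|)
    (fun m s => Hne (last 0%N s).+1).
have iphi : incr phi.
  apply: incrS => n; have [H _] := Hphi n.+1.
  by rewrite mkseqS last_rcons in H.
apply: (@no_diag R X (x \o phi) l eps eps0).
- by move=> k; case: (Hphi k).
- move=> f nf r r0.
  have := Wx f nf.1 (isnf_cont nf).
  move/cvgrPdist_lt => /(_ r r0) [N _ HN]; exists N => k Nk.
  rewrite distrC; apply: HN => /=; exact: leq_trans Nk (incr_ge iphi k).
- move=> phi' iphi'; exact: (AOx (phi \o phi') (incr_comp iphi iphi')).
Qed.
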